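(* Let $G=(V,E)$ be a finite simple graph with at least one vertex and $k>0$ an integer. Let $\mathcal F$ be the set of all sets $\{(A_1,B_1),(A_2,B_2),(A_3,B_3)\}\subseteq\vec S_k$ (the three elements not necessarily distinct) with $G[A_1]\cup G[A_2]\cup G[A_3]=G$, and let $\mathcal F^*\subseteq\mathcal F$ be the set of those elements of $\mathcal F$ that are stars. Then every consistent orientation of $S_k$ that avoids $\mathcal F^*$ also avoids $\mathcal F$.
   Context: An oriented vertex separation of $G$ is an ordered pair $(A,B)$ with $A\cup B=V$ and no edge of $G$ between $A\setminus B$ and $B\setminus A$. These are partially ordered by $(A,B)\le(C,D)$ iff $A\subseteq C$ and $B\supseteq D$, with involution $(A,B)^*=(B,A)$. $\vec S_k$ is the set of oriented vertex separations $(A,B)$ with $|A\cap B|<k$, and $S_k$ the set of unordered pairs $\{(A,B),(B,A)\}$ with $(A,B)\in\vec S_k$. An orientation of $S_k$ is a set $O\subseteq\vec S_k$ containing exactly one of $(A,B),(B,A)$ for each such pair. $O$ is consistent if there are no distinct separations $r,s\in S_k$ with orientations $\vec r<\vec s$ such that $\vec r^{\,*},\vec s\in O$. A star is a nonempty set $\sigma$ of oriented separations with $\vec r\le\vec s^{\,*}$ for all distinct $\vec r,\vec s\in\sigma$. $O$ avoids a family $\mathcal F$ if no subset of $O$ lies in $\mathcal F$. $G[A]$ denotes the induced subgraph. *)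

(* Defs.v *)
From mathcomp Require Import all_boot.
Set Implicit Arguments. Unset Strict Implicit. Unset Printing Implicit Defensive.

(* A graph on a finite vertex type V is given by an edge relation e : rel V
   (simple: symmetric and irreflexive, assumed in the theorem). *)
Definition sep (V : finType) := ({set V} * {set V})%type.

Definition swap (V : finType) (p : sep V) : sep V := (p.2, p.1).

Definition is_sep (V : finType) (e : rel V) (p : sep V) : bool :=
  (p.1 :|: p.2 == setT) &&
  [forall x, forall y, ((x \in p.1 :\: p.2) && (y \in p.2 :\: p.1)) ==> ~~ e x y].

Definition in_Sk (V : finType) (e : rel V) (k : nat) (p : sep V) : bool :=
  is_sep e p && (#|p.1 :&: p.2| < k).

Definition sep_le (V : finType) (p q : sep V) : bool :=
  (p.1 \subset q.1) && (q.2 \subset p.2).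
Definition sep_lt (V : finType) (p q : sep V) : bool := sep_le p q && (p != q).

Definition orientation (V : finType) (e : rel V) (k : nat) (O : {set sep V}) : Prop :=
  (forall p, p \in O -> in_Sk e k p) /\
  (forall p, in_Sk e k p ->
     ((p \in O) || (swap p \in O)) &&
     ((p != swap p) ==> ~~ ((p \in O) && (swap p \in O)))).

Definition consistent (V : finType) (e : rel V) (k : nat) (O : {set sep V}) : Prop :=
  forall r s : sep V, in_Sk e k r -> in_Sk e k s ->
    s != r -> s != swap r -> sep_lt r s ->
    ~ ((swap r \in O) && (s \in O)).

Definition star (V : finType) (sigma : {set sep V}) : Prop :=
  sigma != set0 /\
  (forall r s, r \in sigma -> s \in sigma -> r != s -> sep_le r (swap s)).

Definition famF (V : finType) (e : rel V) (k : nat) (X : {set sep V}) : Prop :=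
  exists p1 p2 p3 : sep V,
    X = [set p1; p2; p3] /\
    in_Sk e k p1 /\ in_Sk e k p2 /\ in_Sk e k p3 /\
    (forall v : V, (v \in p1.1) || (v \in p2.1) || (v \in p3.1)) /\
    (forall x y : V, e x y ->
       ((x \in p1.1) && (y \in p1.1)) || ((x \in p2.1) && (y \in p2.1)) ||
       ((x \in p3.1) && (y \in p3.1))).

Definition famFstar (V : finType) (e : rel V) (k : nat) (X : {set sep V}) : Prop :=
  famF e k X /\ star X.

Definition avoids (V : finType) (O : {set sep V}) (fam : {set sep V} -> Prop) : Prop :=
  forall X : {set sep V}, X \subset O -> ~ fam X.

(* Main.v *)
Require Import Defs.
From mathcomp Require Import all_boot.
Set Implicit Arguments. Unset Strict Implicit.

Lemma corner_ord (V : finType) (A1 B1 A2 B2 : {set V}) :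
  A1 :|: B1 = setT -> A2 :|: B2 = setT ->
  #|(A1:&:B2) :&: (B1:|:A2)| + #|(A2:&:B1) :&: (B2:|:A1)| <= #|A1:&:B1| + #|A2:&:B2|.
Proof.
move=> U1 U2; rewrite -cardsUI -[X in _ <= X]cardsUI.
apply: leq_add; apply: subset_leq_card; apply/subsetP => v;
have := U1; move/setP/(_ v); have := U2; move/setP/(_ v); rewrite !inE;
by case: (v \in A1); case: (v \in B1); case: (v \in A2); case: (v \in B2).
Qed.

Lemma is_sep_corner (V : finType) (e : rel V) (Hsym : symmetric e) (p q : sep V) :
  is_sep e p -> is_sep e q -> is_sep e (p.1 :&: q.2, p.2 :|: q.1).
Proof.
move=> /andP[/eqP U1 /forallP F1] /andP[/eqP U2 /forallP F2]; apply/andP; split.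
  apply/eqP/setP => v; move/setP/(_ v): U1; move/setP/(_ v): U2; rewrite !inE /=.
  by case: (v \in p.1); case: (v \in p.2); case: (v \in q.1); case: (v \in q.2).
apply/forallP => x; apply/forallP => y; apply/implyP.
move/forallP: (F1 x) => /(_ y); move/forallP: (F2 y) => /(_ x).
move/setP: (U1) => /(_ y); move/setP: (U2) => /(_ x); move/setP: (U2) => /(_ y); rewrite !inE /= (Hsym y x).
case: (x \in p.1); case: (x \in p.2); case: (x \in q.1); case: (x \in q.2); case: (y \in p.1); case: (y \in p.2); case: (y \in q.1); case: (y \in q.2); case: (e x y) => /=. all: done. Qed.

From mathcomp Require Import zify.

Definition cov (V : finType) (e : rel V) (p1 p2 p3 : sep V) : Prop :=
    (forall v : V, (v \in p1.1) || (v \in p2.1) || (v \in p3.1)) /\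
    (forall x y : V, e x y ->
       ((x \in p1.1) && (y \in p1.1)) || ((x \in p2.1) && (y \in p2.1)) ||
       ((x \in p3.1) && (y \in p3.1))).

Lemma cov12 (V : finType) (e : rel V) a b c : cov e a b c -> cov e b a c.
Proof.
move=> [h1 h2]; split=> [v|x y exy]; [move: (h1 v) | move: (h2 x y exy)].
  by case: (v \in a.1); case: (v \in b.1); case: (v \in c.1).
by case: (x \in a.1); case: (x \in b.1); case: (x \in c.1);
   case: (y \in a.1); case: (y \in b.1); case: (y \in c.1).
Qed.

Lemma cov23 (V : finType) (e : rel V) a b c : cov e a b c -> cov e a c b.
Proof.
move=> [h1 h2]; split=> [v|x y exy]; [move: (h1 v) | move: (h2 x y exy)].
  by case: (v \in a.1); case: (v \in b.1); case: (v \in c.1).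
by case: (x \in a.1); case: (x \in b.1); case: (x \in c.1);
   case: (y \in a.1); case: (y \in b.1); case: (y \in c.1).
Qed.

Lemma cov_shift (V : finType) (e : rel V) (Hsym : symmetric e) (p q r : sep V) :
  is_sep e q -> cov e p q r -> cov e (p.1 :&: q.2, p.2 :|: q.1) q r.
Proof.
move=> /andP[/eqP U2 /forallP F2] [h1 h2]; split=> [v|x y exy] /=.
  move: (h1 v); move/setP: (U2) => /(_ v); rewrite !inE.
  by case: (v \in p.1); case: (v \in q.1); case: (v \in q.2); case: (v \in r.1).
move: (h2 x y exy).
move/forallP: (F2 y) => /(_ x); move/forallP: (F2 x) => /(_ y).
move/setP: (U2) => /(_ y); move/setP: (U2) => /(_ x); rewrite !inE (Hsym y x) exy.
by case: (x \in p.1); case: (x \in q.1); case: (x \in q.2); case: (x \in r.1);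
   case: (y \in p.1); case: (y \in q.1); case: (y \in q.2); case: (y \in r.1).
Qed.

Lemma nat_lt1 (x' x y z N : nat) : x' < x -> x + y + z <= N -> x' + y + z < N.
Proof. lia. Qed.
Lemma nat_lt2 (x' x y z N : nat) : x' < y -> x + y + z <= N -> x' + x + z < N.
Proof. lia. Qed.
Lemma nat_sub (X Y A B : nat) : X + Y <= A + B -> A < X -> Y <= B.
Proof. lia. Qed.
Lemma perm3 (x y z N : nat) : x + y + z <= N ->
  [/\ x + z + y <= N, y + x + z <= N, y + z + x <= N, z + x + y <= N & z + y + x <= N].
Proof. by move=> h; split; lia. Qed.

Definition msr (V : finType) (p : sep V) := #|p.1| + #|~: p.2|.

Lemma shift1 (V : finType) (e : rel V) (k : nat) (O : {set sep V})
  (Hsym : symmetric e) (p q : sep V) :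
  orientation e k O -> consistent e k O -> p \in O -> q \in O ->
  ~~ sep_le p (swap q) -> ~~ (p.2 \subset p.1) ->
  #|(p.1 :&: q.2) :&: (p.2 :|: q.1)| <= #|p.1 :&: p.2| ->
  (p.1 :&: q.2, p.2 :|: q.1) \in O /\ msr (p.1 :&: q.2, p.2 :|: q.1) < msr p.
Proof.
move=> [Hin Hor] Hcons pO qO nle nco Hord.
set c := (p.1 :&: q.2, p.2 :|: q.1) in Hord *.
have /andP[sp op] := Hin p pO; have /andP[sq oq] := Hin q qO.
have cS : in_Sk e k c.
  by apply/andP; split; [exact: is_sep_corner | exact: leq_ltn_trans Hord op].
have cle : sep_le c p by apply/andP; split; [exact: subsetIl | exact: subsetUl].
have cnp : c != p.
  apply/negP => /eqP cp; move: nle; rewrite /sep_le /=.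
  have h1 : p.1 :&: q.2 = p.1 by rewrite -[in RHS]cp.
  have h2 : p.2 :|: q.1 = p.2 by rewrite -[in RHS]cp.
  by move/setIidPl: h1 => ->; move/setUidPl: h2 => ->.
have pnc : p != swap c.
  apply/negP => /eqP pc.
  have e2 : p.2 = p.1 :&: q.2 by rewrite {1}pc.
  by move: nco; rewrite e2 subsetIl.
have cO : c \in O.
  move: (Hor c cS) => /andP[/orP[//|sO] _].
  exfalso; apply: (Hcons c p cS (Hin p pO) _ pnc _ _).
  - by rewrite eq_sym.
  - by rewrite /sep_lt cle cnp.
  - by rewrite sO pO.
split=> //.
clearbody c; case: c cle cnp {cS cO Hord pnc} => c1 c2 /andP[/= s1 s2] cnp.
have s2' : ~: c2 \subset ~: p.2 by rewrite setCS.
have h1 := subset_leqif_cards s1; have h2 := subset_leqif_cards s2'.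
rewrite /msr /= ltn_neqAle (leqif_add h1 h2).1 andbT (leqif_add h1 h2).2.
apply: contra cnp => /andP[/eqP -> /eqP/setC_inj ->].
by case: (p).
Qed.

Lemma key (V : finType) (e : rel V) (k : nat) (O : {set sep V})
  (Hsym : symmetric e) (a b c : sep V) (N : nat) :
  orientation e k O -> consistent e k O ->
  (forall a' b' c', msr a' + msr b' + msr c' < N -> a' \in O -> b' \in O ->
     c' \in O -> cov e a' b' c' -> False) ->
  cov e a b c -> msr a + msr b + msr c <= N -> a \in O -> b \in O -> c \in O ->
  ~~ (a.2 \subset a.1) -> ~~ (b.2 \subset b.1) -> ~~ sep_le a (swap b) -> False.
Proof.
move=> Ho Hc IH hc hN aO bO cO na nb nab.
have /andP[sa _] := Ho.1 a aO; have /andP[sb _] := Ho.1 b bO.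
have /andP[/eqP Ua _] := sa; have /andP[/eqP Ub _] := sb.
have := corner_ord Ua Ub.
case: (leqP #|(a.1 :&: b.2) :&: (a.2 :|: b.1)| #|a.1 :&: a.2|) => h1 h.
  have [cO' lt] := shift1 Hsym Ho Hc aO bO nab na h1.
  apply: (IH _ b c _ cO' bO cO); first exact: nat_lt1 lt hN.
  exact: cov_shift.
have h2 : #|(b.1 :&: a.2) :&: (b.2 :|: a.1)| <= #|b.1 :&: b.2| by exact: nat_sub h h1.
have nba : ~~ sep_le b (swap a) by move: nab; rewrite /sep_le /= andbC.
have [cO' lt] := shift1 Hsym Ho Hc bO aO nba nb h2.
apply: (IH _ a c _ cO' aO cO); first exact: nat_lt2 lt hN.
by apply: cov_shift => //; exact: cov12.
Qed.

Theorem lemma5p2 (V : finType) (e : rel V) (k : nat)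
  (Hsym : symmetric e) (Hirr : irreflexive e) (Hne : 0 < #|V|) (Hk : 0 < k)
  (O : {set sep V}) :
  orientation e k O -> consistent e k O -> avoids O (famFstar e k) ->
  avoids O (famF e k).
Proof.
move=> Ho Hc Hav X XO [p1 [p2 [p3 [HX [i1 [i2 [i3 [cv ce]]]]]]]].
have single : forall p, p \in O -> p.2 \subset p.1 -> False.
  move=> p pO sub; have pS := Ho.1 p pO.
  have /andP[/andP[/eqP U _] _] := pS.
  have inp : forall v, v \in p.1.
    move=> v; move/setP: U => /(_ v); rewrite !inE.
    by case: (boolP (v \in p.2)) => [/(subsetP sub)-> | _]; rewrite ?orbF.
  apply: (Hav [set p; p; p]).
    by apply/subsetP => x; rewrite !inE => /orP[/orP[]|] /eqP ->.
  split.
    exists p, p, p; do !split => //.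
      by move=> v; rewrite inp.
    by move=> x y _; rewrite !inp.
  split.
    by apply/set0Pn; exists p; rewrite !inE eqxx.
  by move=> r s; rewrite !inE => /orP[/orP[]|] /eqP -> /orP[/orP[]|] /eqP ->; rewrite eqxx.
have main : forall N a b c, msr a + msr b + msr c < N -> a \in O -> b \in O ->
    c \in O -> cov e a b c -> False.
  elim=> [|N IH] a b c; first by rewrite ltn0.
  move=> hN aO bO cO hc.
  case: (boolP (a.2 \subset a.1)) => [/(single _ aO)//|na].
  case: (boolP (b.2 \subset b.1)) => [/(single _ bO)//|nb].
  case: (boolP (c.2 \subset c.1)) => [/(single _ cO)//|nc].
  have keyN := fun x y z H => @key V e k O Hsym x y z N Ho Hc IH H.
  set Y := [set a; b; c].
  case: (boolP [forall r in Y, forall s in Y, (r != s) ==> sep_le r (swap s)]) => Hst.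
    apply: (Hav Y).
      by apply/subsetP => x; rewrite !inE => /orP[/orP[]|] /eqP ->.
    split.
      exists a, b, c; do !split => //; by [apply: (proj1 Ho) | case: hc].
    split.
      by apply/set0Pn; exists a; rewrite !inE eqxx.
    move=> r s rY sY rs; move/forallP: Hst => /(_ r); rewrite rY /=.
    by move/forallP => /(_ s); rewrite sY rs.
  move/forallPn: Hst => [r]; rewrite negb_imply => /andP[rY /forallPn [s]].
  rewrite !negb_imply => /andP[sY /andP[rs nle]].
  have [P1 P2 P3 P4 P5] := perm3 hN.
  move: rY sY rs nle; rewrite !inE => /orP[/orP[]|]/eqP-> /orP[/orP[]|]/eqP->;
    rewrite ?eqxx // => _ nle.
  - exact: (keyN a b c hc hN aO bO cO na nb nle).
  - exact: (keyN a c b (cov23 hc) P1 aO cO bO na nc nle).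
  - exact: (keyN b a c (cov12 hc) P2 bO aO cO nb na nle).
  - exact: (keyN b c a (cov23 (cov12 hc)) P3 bO cO aO nb nc nle).
  - exact: (keyN c a b (cov12 (cov23 hc)) P4 cO aO bO nc na nle).
  - exact: (keyN c b a (cov12 (cov23 (cov12 hc))) P5 cO bO aO nc nb nle).
have sO : forall p, p \in X -> p \in O by move=> p /(subsetP XO).
apply: (main (msr p1 + msr p2 + msr p3).+1 p1 p2 p3) => //;
  try (apply: sO; rewrite HX !inE eqxx ?orbT //).
Qed.
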